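(* Let $I$ be an instance and let $\sigma+e$ be an $I$-feasible event sequence, where $e$ is a single event. Then for each $I$-feasible event sequence $\sigma'$ that contains all events of $\sigma$ but does not contain $e$, the sequence $\sigma'+e$ is $I$-feasible.
   Context: An instance $I$ consists of finite disjoint sets $R$ (residents) and $H$ (hospitals), a positive integer quota $q_h$ for each $h\in H$, for each $r\in R$ a preference list of $r$ (a sequence of distinct members of $H$, not necessarily all), and for each $h\in H$ a preference list of $h$ (a sequence of distinct members of $R$). A match is a pair $(r,h)\in R\times H$. For a set $M$ of matches, $\mathrm{res}_h M=\{r:(r,h)\in M\}$, $\mathrm{res}\,M=\{r:(r,h)\in M\text{ for some }h\}$. An event is $(r,h)^+$ (proposal) or $(r,h)^-$ (rejection); $+$ denotes concatenation/appending. For an event sequence $\sigma$, $\mathrm{prop}(\sigma)$, $\mathrm{rej}(\sigma)$ are the sets of matches proposed/rejected in $\sigma$ and $\mathrm{tent}(\sigma)=\mathrm{prop}(\sigma)\setminus\mathrm{rej}(\sigma)$. A match $(r,h)\in M$ is ousted from $M$ in $I$ if the list of $h$ in $I$ contains at least $q_h$ residents of $\mathrm{res}_h M$ and either $r$ is not on it or $r$ is preceded on it by at least $q_h$ residents of $\mathrm{res}_h M$. $I$-feasible sequences are defined inductively: the empty sequence is $I$-feasible; if $\sigma$ is $I$-feasible then $\sigma+(r,h)^+$ is $I$-feasible if $r\notin\mathrm{res}\,\mathrm{tent}(\sigma)$, $(r,h)\notin\mathrm{prop}(\sigma)$, $h$ is on the list of $r$ in $I$ and $(r,h')\in\mathrm{rej}(\sigma)$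 for every $h'$ preceding $h$ on it; and $\sigma+(r,h)^-$ is $I$-feasible if $(r,h)$ is ousted from $\mathrm{prop}(\sigma)$ in $I$ and $(r,h)\notin\mathrm{rej}(\sigma)$. *)

(* Defs.v *)
From mathcomp Require Import all_boot.
Set Implicit Arguments. Unset Strict Implicit. Unset Printing Implicit Defensive.

(* Residents and hospitals are two distinct finite types (hence disjoint). *)
Record instance (R H : finType) := Instance {
  quota : H -> nat;
  quota_pos : forall h, 0 < quota h;
  rpref : R -> seq H;
  rpref_uniq : forall r, uniq (rpref r);
  hpref : H -> seq R;
  hpref_uniq : forall h, uniq (hpref h)
}.

Section Defs.
Variables (R H : finType).

(* A match is a pair (r,h); an event is a match together with a sign:
   true = proposal (r,h)^+, false = rejection (r,h)^-. *)
Definition event : finType := ((R * H) * bool)%type.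
Definition propose (r : R) (h : H) : event := ((r, h), true).
Definition reject (r : R) (h : H) : event := ((r, h), false).

Definition prop (s : seq event) : {set R * H} := [set m | (m, true) \in s].
Definition rej (s : seq event) : {set R * H} := [set m | (m, false) \in s].
Definition tent (s : seq event) : {set R * H} := prop s :\: rej s.

Definition res_h (M : {set R * H}) (h : H) : {set R} := [set r | (r, h) \in M].
Definition res (M : {set R * H}) : {set R} := [set r | [exists h, (r, h) \in M]].

Definition cnt_res (M : {set R * H}) (h : H) (l : seq R) : nat :=
  count (fun r' => r' \in res_h M h) l.

Definition ousted (I : instance R H) (M : {set R * H}) (r : R) (h : H) : bool :=
  let l := hpref I h in
  [&& (r, h) \in M,
      quota I h <= cnt_res M h l &
      (r \notin l) || (quota I h <= cnt_res M h (take (index r l) l))].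

(* I-feasible event sequences; "+" is appending (rcons). *)
Inductive feasible (I : instance R H) : seq event -> Prop :=
| feasible_nil : feasible I [::]
| feasible_prop (s : seq event) (r : R) (h : H) :
    feasible I s ->
    r \notin res (tent s) ->
    (r, h) \notin prop s ->
    h \in rpref I r ->
    (forall h', h' \in take (index h (rpref I r)) (rpref I r) -> (r, h') \in rej s) ->
    feasible I (rcons s (propose r h))
| feasible_rej (s : seq event) (r : R) (h : H) :
    feasible I s ->
    ousted I (prop s) r h ->
    (r, h) \notin rej s ->
    feasible I (rcons s (reject r h)).

End Defs.

(* Main.v *)
Require Import Defs.
From mathcomp Require Import all_boot.

Section Aux.
Variables (R H : finType) (I : instance R H).

Lemma inv_feas (t : seq (event R H)) : feasible I t ->
  (forall m, (m, false) \in t -> (m, true) \in t) /\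
  (forall r h, (r, h, true) \in t -> h \in rpref I r /\
     forall h', h' \in take (index h (rpref I r)) (rpref I r) -> (r, h', false) \in t).
Proof.
elim=> [|s r h _ [IB IA] _ _ Hin Htk|s r h _ [IB IA] Hou _].
- by split=> [m|r h]; rewrite in_nil.
- split.
  + move=> m; rewrite !mem_rcons !inE => /orP[/eqP//|/IB Hm]; apply/orP; by right.
  + move=> r' h'; rewrite mem_rcons !inE => /orP[/eqP[-> ->]|/IA[H1 H2]].
    * split=> // h2 /Htk; rewrite inE => Hh; rewrite mem_rcons inE; apply/orP; by right.
    * split=> // h2 /H2 Hh; rewrite mem_rcons inE; apply/orP; by right.
- split.
  + move=> m; rewrite !mem_rcons !inE => /orP[/eqP[->]|/IB Hm]; last by apply/orP; right.
    move: Hou; rewrite /ousted => /and3P[]; rewrite inE => Hm _ _; apply/orP; by right.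
  + move=> r' h'; rewrite mem_rcons !inE => /orP[/eqP//|/IA[H1 H2]].
    split=> // h2 /H2 Hh; rewrite mem_rcons inE; apply/orP; by right.
Qed.

Lemma cnt_mono (M N : {set R * H}) h l : M \subset N -> cnt_res M h l <= cnt_res N h l.
Proof.
move=> sub; rewrite /cnt_res; elim: l => //= x l IH.
case: (x \in res_h M h) / boolP => Hx.
- have : x \in res_h N h by move: Hx; rewrite !inE => /(subsetP sub).
  by move=> ->.
- by rewrite add0n; apply: leq_trans IH (leq_addl _ _).
Qed.

Lemma feas_rcons_inv t e : feasible I (rcons t e) ->
  exists r h, ((e = propose r h) /\ feasible I t /\ r \notin res (tent t) /\
    (r, h) \notin prop t /\ h \in rpref I r /\
    (forall h', h' \in take (index h (rpref I r)) (rpref I r) -> (r, h') \in rej t))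
  \/ ((e = reject r h) /\ feasible I t /\ ousted I (prop t) r h).
Proof.
move=> F; move E: (rcons t e) F => u F; case: F E.
- by case: t.
- move=> s r h F1 H1 H2 H3 H4 /rcons_inj [-> ->]; exists r, h; left; tauto.
- move=> s r h F1 H1 H2 /rcons_inj [-> ->]; exists r, h; right; tauto.
Qed.

End Aux.

Theorem proposition1 (R H : finType) (I : instance R H)
    (s : seq (event R H)) (e : event R H) :
  feasible I (rcons s e) ->
  forall s' : seq (event R H),
    feasible I s' ->
    (forall x, x \in s -> x \in s') ->
    e \notin s' ->
    feasible I (rcons s' e).
Proof.
move=> /feas_rcons_inv [r [h [[-> [Fs [Hres [Hprop [Hin Htk]]]]]|[-> [Fs Hou]]]]] s' F' sub Hn.
- have [IB IA] := @inv_feas _ _ I _ F'.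
  apply: feasible_prop => //.
  + apply/negP; rewrite inE => /existsP[h2]; rewrite !inE => /andP[Hr2 Hp2].
    have [Hin2 Htk2] := IA _ _ Hp2.
    have [Hlt|Hge] := ltnP (index h2 (rpref I r)) (index h (rpref I r)).
    * have := Htk h2; rewrite in_take // Hlt inE => /(_ erefl) /sub Hr.
      by rewrite Hr in Hr2.
    * case: (h2 =P h) => [E|Ne].
        by subst h2; rewrite /propose Hp2 in Hn.
      have Hlt : index h (rpref I r) < index h2 (rpref I r).
        rewrite ltn_neqAle Hge andbT; apply/eqP => E.
        by apply: Ne; rewrite -(nth_index h Hin) -(nth_index h Hin2) E.
      have := Htk2 h; rewrite in_take // Hlt => /(_ erefl) /IB Hp.
      by rewrite /propose Hp in Hn.
  + by rewrite inE.
  + by move=> h2 /Htk; rewrite !inE => /sub.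
- apply: feasible_rej => //; last by rewrite inE.
  have sP : prop s \subset prop s' by apply/subsetP=> m; rewrite !inE => /sub.
  move: Hou; rewrite /ousted => /and3P[Hm Hq Ho]; apply/and3P; split.
  + by move/(subsetP sP): Hm.
  + apply: leq_trans Hq _; exact: cnt_mono.
  + case/orP: Ho => [->//|Ho]; apply/orP; right; apply: leq_trans Ho _; exact: cnt_mono.
Qed.
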